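(* Under the standing assumptions, $\mathbf l_j=Q_{2,j}^*(a)\,\widehat H_{2,j}^{-1}\,Q_{2,j}(a)$ for $0\le j\le n-1$ and $\mathbf m_j=\Gamma_{1,j}^*(a)\,\widehat K_{1,j}^{-1}\,\Gamma_{1,j}(a)$ for $0\le j\le n$; moreover all $\mathbf l_j$ ($0\le j\le n-1$) and $\mathbf m_j$ ($0\le j\le n$) are positive definite matrices.
   Context: Let $q,n\in\mathbb N$ and let $a<b$ be real numbers. All matrices are complex; $I_q$, $0_q$ are the $q\times q$ identity and zero matrices. Let $s_0,\dots,s_{2n+1}$ be Hermitian $q\times q$ matrices and set $\widehat s_j:=-ab\,s_j+(a+b)s_{j+1}-s_{j+2}$. Define $H_{1,j}:=(s_{l+k})_{l,k=0}^j$, $H_{2,j}:=(\widehat s_{l+k})_{l,k=0}^{j}$, $K_{1,j}:=(bs_{l+k}-s_{l+k+1})_{l,k=0}^{j}$, $K_{2,j}:=(-as_{l+k}+s_{l+k+1})_{l,k=0}^j$. Standing assumption: $H_{1,n},H_{2,n-1},K_{1,n},K_{2,n}$ are positive definite. Let $T_0:=0_q$ and, for $j\ge1$, let $T_j$ be the $(j+1)\times(j+1)$ block matrix (blocks $q\times q$) with $I_q$ in block positions $(l+1,l)$, $l=0,\dots,j-1$, and $0_q$ elsewhere; $R_j(z):=(I_{(j+1)q}-zT_j)^{-1}$; $v_j:=\mathrm{col}(I_q,0_q,\dots,0_q)\in\mathbb C^{(j+1)q\times q}$. Let $u_{2,0}:=-(a+b)s_0+s_1$, $u_{2,j}:=\mathrm{col}(u_{2,0},-\widehat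 s_0,\dots,-\widehat s_{j-1})$; for $j\ge1$, $Y_{2,j}:=\mathrm{col}(\widehat s_j,\dots,\widehat s_{2j-1})$, $\widetilde Y_{1,j}:=\mathrm{col}(bs_j-s_{j+1},\dots,bs_{2j-1}-s_{2j})$. Schur complements: $\widehat H_{2,0}:=\widehat s_0$, $\widehat H_{2,j}:=\widehat s_{2j}-Y_{2,j}^*H_{2,j-1}^{-1}Y_{2,j}$; $\widehat K_{1,0}:=bs_0-s_1$, $\widehat K_{1,j}:=bs_{2j}-s_{2j+1}-\widetilde Y_{1,j}^*K_{1,j-1}^{-1}\widetilde Y_{1,j}$. Polynomials: $Q_{2,0}(z):=-(u_{2,0}+zs_0)$, $\Gamma_{1,0}:=I_q$; for $j\ge1$: $Q_{2,j}(z):=-(-Y_{2,j}^*H_{2,j-1}^{-1},I_q)R_j(z)(u_{2,j}+zv_js_0)$, $\Gamma_{1,j}(z):=(-\widetilde Y_{1,j}^*K_{1,j-1}^{-1},I_q)R_j(z)v_j$. Dyukarev–Stieltjes matrix (DSM) parameters: let $\lambda_j:=(u_{2,j}+av_js_0)^*R_j^*(a)H_{2,j}^{-1}R_j(a)(u_{2,j}+av_js_0)$ ($0\le j\le n-1$) and $\mu_j:=v_j^*R_j^*(a)K_{1,j}^{-1}R_j(a)v_j$ ($0\le j\le n$). Set $\mathbf l_{-1}:=s_0$, $\mathbf l_0:=\lambda_0$, $\mathbf l_j:=\lambda_j-\lambda_{j-1}$ ($1\le j\le n-1$), and $\mathbf m_0:=\mu_0=(bs_0-s_1)^{-1}$,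 $\mathbf m_j:=\mu_j-\mu_{j-1}$ ($1\le j\le n$). *)

(* Defs.v *)
(* Complex scalars: an arbitrary numClosedFieldType C
   (the field of complex numbers is the model). *)
From HB Require Import structures.
From mathcomp Require Import all_boot all_order all_algebra.
Set Implicit Arguments. Unset Strict Implicit. Unset Printing Implicit Defensive.
Import Order.TTheory GRing.Theory Num.Theory.
Local Open Scope ring_scope.

Section DSM.
Variable C : numClosedFieldType.

Definition ctrmx (m n : nat) (A : 'M[C]_(m, n)) : 'M[C]_(n, m) :=
  map_mx Num.conj (A^T).

Definition herm_mx (m : nat) (A : 'M[C]_m) : Prop := ctrmx A = A.

Definition posdef (m : nat) (A : 'M[C]_m) : Prop :=
  herm_mx A /\ forall x : 'cV[C]_m, x != 0 -> 0 < (ctrmx x *m A *m x) 0 0.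

Variable q : nat.

Notation bsz m := (\sum_(i < m) (fun _ : 'I_m => q) i)%N.

Definition bmx (m : nat) (B : nat -> nat -> 'M[C]_q) : 'M[C]_(bsz m) :=
  @mxblock C m m (fun _ => q) (fun _ => q) (fun l k => B (val l) (val k)).

Definition bcol (m : nat) (B : nat -> 'M[C]_q) : 'M[C]_(bsz m, q) :=
  @mxcol C m (fun _ => q) q (fun l => B (val l)).

Definition hankel (m : nat) (t : nat -> 'M[C]_q) : 'M[C]_(bsz m) :=
  bmx m (fun l k => t (l + k)%N).

Lemma bsz_recr (j : nat) : (bsz j + q)%N = bsz j.+1.
Proof. by rewrite big_ord_recr. Qed.

Definition brow_I (j : nat) (X : 'M[C]_(q, bsz j)) : 'M[C]_(q, bsz j.+1) :=
  castmx (erefl q, bsz_recr j) (row_mx X 1%:M).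

Definition Tmx (j : nat) : 'M[C]_(bsz j.+1) :=
  bmx j.+1 (fun l k => if l == k.+1 then 1%:M else 0).
Definition Rmx (j : nat) (z : C) : 'M[C]_(bsz j.+1) :=
  invmx (1%:M - z *: Tmx j).
Definition vmx (j : nat) : 'M[C]_(bsz j.+1, q) :=
  bcol j.+1 (fun l => if l == 0%N then 1%:M else 0).

Variables (a b : C) (s : nat -> 'M[C]_q).

Definition shat (j : nat) : 'M[C]_q :=
  - (a * b) *: s j + (a + b) *: s j.+1 - s j.+2.

Definition H1 (j : nat) := hankel j.+1 s.
Definition H2 (j : nat) := hankel j.+1 shat.
Definition K1 (j : nat) := hankel j.+1 (fun i => b *: s i - s i.+1).
Definition K2 (j : nat) := hankel j.+1 (fun i => - a *: s i + s i.+1).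

Definition u20 : 'M[C]_q := - (a + b) *: s 0%N + s 1%N.
Definition u2 (j : nat) : 'M[C]_(bsz j.+1, q) :=
  bcol j.+1 (fun l => if l == 0%N then u20 else - shat l.-1).

Definition Y2 (j : nat) : 'M[C]_(bsz j, q) := bcol j (fun l => shat (j + l)).
Definition Yt1 (j : nat) : 'M[C]_(bsz j, q) :=
  bcol j (fun l => b *: s (j + l)%N - s (j + l).+1).

Definition H2hat (j : nat) : 'M[C]_q :=
  match j with
  | 0 => shat 0
  | j'.+1 => shat (2 * j'.+1)%N - ctrmx (Y2 j'.+1) *m invmx (H2 j') *m Y2 j'.+1
  end.
Definition K1hat (j : nat) : 'M[C]_q :=
  match j with
  | 0 => b *: s 0%N - s 1%N
  | j'.+1 => b *: s (2 * j'.+1)%N - s (2 * j'.+1).+1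
             - ctrmx (Yt1 j'.+1) *m invmx (K1 j') *m Yt1 j'.+1
  end.

Definition Q2 (j : nat) (z : C) : 'M[C]_q :=
  match j with
  | 0 => - (u20 + z *: s 0%N)
  | j'.+1 => - (brow_I (- (ctrmx (Y2 j'.+1) *m invmx (H2 j'))) *m Rmx j'.+1 z
                 *m (u2 j'.+1 + z *: (vmx j'.+1 *m s 0%N)))
  end.
Definition Gamma1 (j : nat) (z : C) : 'M[C]_q :=
  match j with
  | 0 => 1%:M
  | j'.+1 => brow_I (- (ctrmx (Yt1 j'.+1) *m invmx (K1 j'))) *m Rmx j'.+1 z
             *m vmx j'.+1
  end.

Definition lambda (j : nat) : 'M[C]_q :=
  let w := u2 j + a *: (vmx j *m s 0%N) in
  ctrmx w *m ctrmx (Rmx j a) *m invmx (H2 j) *m Rmx j a *m w.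
Definition mu (j : nat) : 'M[C]_q :=
  ctrmx (vmx j) *m ctrmx (Rmx j a) *m invmx (K1 j) *m Rmx j a *m vmx j.

(* bold l_j for j >= 0 (l_{-1} := s_0 is not needed in the statement) *)
Definition lbold (j : nat) : 'M[C]_q :=
  match j with 0 => lambda 0 | j'.+1 => lambda j'.+1 - lambda j' end.
Definition mbold (j : nat) : 'M[C]_q :=
  match j with 0 => mu 0 | j'.+1 => mu j'.+1 - mu j' end.

End DSM.

(* Main.v *)
Require Import Defs.
From HB Require Import structures.
From mathcomp Require Import all_boot all_order all_algebra.
From mathcomp Require Import zify ring.
Set Implicit Arguments. Unset Strict Implicit. Unset Printing Implicit Defensive.
Import Order.TTheory GRing.Theory Num.Theory.
Local Open Scope ring_scope.

Lemma sum_lt_const m (i : 'I_m) q : (\sum_(k < m | (k < i)%N) q = i * q)%N.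
Proof.
rewrite -(big_ord_widen _ (fun _ => q) (ltnW (ltn_ord i))).
by rewrite sum_nat_const card_ord.
Qed.

Section Blocks.
Variable C : numClosedFieldType.
Variable q : nat.
Notation bsz m := (\sum_(i < m) (fun _ : 'I_m => q) i)%N.

Lemma bszE m : bsz m = (m * q)%N.
Proof. by rewrite sum_nat_const card_ord. Qed.

Definition bc m p (g : nat -> 'M[C]_(q, p)) : 'M[C]_(bsz m, p) :=
  @mxcol C m (fun _ => q) p (fun l => g (val l)).
Definition br m p (g : nat -> 'M[C]_(p, q)) : 'M[C]_(p, bsz m) :=
  @mxrow C m (fun _ => q) p (fun l => g (val l)).

Lemma bcolE m (g : nat -> 'M[C]_q) : bcol m g = bc m g. Proof. by []. Qed.

Lemma bc_entry m p (g : nat -> 'M[C]_(q, p)) (i : 'I_m) (r : 'I_q) k :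
  bc m g (tagnat.Rank i r) k = g i r k.
Proof.
have := mxcolK (fun l : 'I_m => g (val l)) i.
by move/matrixP => /(_ r k); rewrite !mxE.
Qed.

Lemma Rank_val m (i : 'I_m) (r : 'I_q) :
  (@tagnat.Rank m (fun _ => q) i r : nat) = (i * q + r)%N.
Proof. by rewrite tagnat.RankEsum sum_lt_const. Qed.

Lemma bc_recr m p (g : nat -> 'M[C]_(q, p)) :
  bc m.+1 g = castmx (bsz_recr q m, erefl) (col_mx (bc m g) (g m)).
Proof.
apply/matrixP => x k.
rewrite -[x]tagnat.sig2K.
move: (tagnat.sig1 x) (tagnat.sig2 x) => i r.
rewrite bc_entry castmxE mxE cast_ord_id.
have Hz : (cast_ord (esym (bsz_recr q m)) (tagnat.Rank i r) : nat) = (i * q + r)%N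
  := Rank_val i r.
have lr := ltn_ord r; have li := ltn_ord i.
case: splitP => y Hy; rewrite Hz in Hy.
  have ly : (y < m * q)%N := leq_trans (ltn_ord y) (eq_leq (bszE m)).
  have ltim : (i < m)%N.
    rewrite -(ltn_pmul2r (leq_ltn_trans (leq0n _) lr)); lia.
  have -> : y = tagnat.Rank (Ordinal ltim) r.
    apply: val_inj; rewrite [RHS]Rank_val. exact: (esym Hy).
  by rewrite bc_entry.
move: Hy; rewrite (bszE m) => Hy.
have ly := ltn_ord y.
have eim : (i : nat) = m.
  apply/eqP; rewrite eqn_leq -ltnS li andTb.
  rewrite leqNgt; apply/negP => him.
  have : (i * q + r < m * q)%N.
    apply: (@leq_trans (i * q + q)); first by rewrite ltn_add2l.
    by rewrite addnC -mulSn leq_mul2r him orbT.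
  by rewrite Hy; lia.
have ery : r = y.
  by apply: val_inj; move: Hy; rewrite eim => /eqP; rewrite eqn_add2l => /eqP.
by rewrite ery eim.
Qed.

Lemma castmx_mul_cancel n1 n2 p1 p2 (e : n1 = n2) (A : 'M[C]_(p1, n1)) (B : 'M[C]_(n1, p2)) :
  castmx (erefl, e) A *m castmx (e, erefl) B = A *m B.
Proof. by case: n2 / e; rewrite !castmx_id. Qed.

Lemma brow_I_mul j p (X : 'M[C]_(q, bsz j)) (g : nat -> 'M[C]_(q, p)) :
  brow_I X *m bc j.+1 g = X *m bc j g + g j.
Proof.
by rewrite /brow_I bc_recr castmx_mul_cancel mul_row_col mul1mx.
Qed.

Lemma bc_mul m p p' (g : nat -> 'M[C]_(q, p)) (A : 'M[C]_(p, p')) :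
  bc m g *m A = bc m (fun l => g l *m A).
Proof. by rewrite /bc mxcol_mul. Qed.

Lemma bcD m p (f g : nat -> 'M[C]_(q, p)) : bc m f + bc m g = bc m (fun l => f l + g l).
Proof. by rewrite /bc mxcolD. Qed.

Lemma bcN m p (f : nat -> 'M[C]_(q, p)) : - bc m f = bc m (fun l => - f l).
Proof. by rewrite /bc mxcolN. Qed.

Lemma bcZ m p (c : C) (f : nat -> 'M[C]_(q, p)) : c *: bc m f = bc m (fun l => c *: f l).
Proof. by apply/matrixP => i k; rewrite !mxE. Qed.

Lemma bc0 m p : bc m (fun _ => 0 : 'M[C]_(q, p)) = 0.
Proof. by rewrite /bc mxcol0. Qed.

Lemma eq_bc m p (f g : nat -> 'M[C]_(q, p)) :
  (forall l, (l < m)%N -> f l = g l) -> bc m f = bc m g.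
Proof. move=> H; rewrite /bc; apply: eq_mxcol => i; exact: H (ltn_ord i). Qed.

Lemma bc_inj m p (f g : nat -> 'M[C]_(q, p)) :
  bc m f = bc m g -> forall l, (l < m)%N -> f l = g l.
Proof.
move=> H l lm.
have := congr1 (fun V => submxcol V (Ordinal lm)) H.
by rewrite /bc !mxcolK.
Qed.

Definition blk m p (V : 'M[C]_(bsz m, p)) (l : nat) : 'M[C]_(q, p) :=
  if (insub l : option 'I_m) is Some i then submxcol V i else 0.

Lemma blkK m p (V : 'M[C]_(bsz m, p)) : bc m (blk V) = V.
Proof.
rewrite -[RHS]submxcolK; apply: eq_mxcol => i.
by rewrite /blk valK.
Qed.

Lemma bmx_mul_bc m p (B : nat -> nat -> 'M[C]_q) (g : nat -> 'M[C]_(q, p)) :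
  bmx m B *m bc m g = bc m (fun l => \sum_(k < m) B l k *m g k).
Proof. by rewrite /bmx /bc mul_mxblock_mxrow. Qed.

Lemma br_mul_bc m p p' (f : nat -> 'M[C]_(p, q)) (g : nat -> 'M[C]_(q, p')) :
  br m f *m bc m g = \sum_(l < m) f l *m g l.
Proof. by rewrite /br /bc mul_mxrow_mxcol. Qed.

Lemma ctrmxK m n (A : 'M[C]_(m, n)) : ctrmx (ctrmx A) = A.
Proof. by apply/matrixP => i k; rewrite !mxE conjCK. Qed.

Lemma ctrmx_mul m n p (A : 'M[C]_(m, n)) (B : 'M[C]_(n, p)) :
  ctrmx (A *m B) = ctrmx B *m ctrmx A.
Proof. by rewrite /ctrmx trmx_mul map_mxM. Qed.

Lemma ctrmxD m n (A B : 'M[C]_(m, n)) : ctrmx (A + B) = ctrmx A + ctrmx B.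
Proof. by apply/matrixP => i k; rewrite !mxE rmorphD. Qed.

Lemma ctrmxN m n (A : 'M[C]_(m, n)) : ctrmx (- A) = - ctrmx A.
Proof. by apply/matrixP => i k; rewrite !mxE rmorphN. Qed.

Lemma ctrmxB m n (A B : 'M[C]_(m, n)) : ctrmx (A - B) = ctrmx A - ctrmx B.
Proof. by rewrite ctrmxD ctrmxN. Qed.

Lemma ctrmxZ m n (c : C) (A : 'M[C]_(m, n)) : ctrmx (c *: A) = c^* *: ctrmx A.
Proof. by apply/matrixP => i k; rewrite !mxE rmorphM. Qed.

Lemma ctrmx0 m n : ctrmx (0 : 'M[C]_(m, n)) = 0.
Proof. by apply/matrixP => i k; rewrite !mxE rmorph0. Qed.

Lemma ctrmx1 m : ctrmx (1%:M : 'M[C]_m) = 1%:M.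
Proof. by apply/matrixP => i k; rewrite !mxE eq_sym; case: (_ == _); rewrite ?rmorph1 ?rmorph0. Qed.

Lemma ctrmx_inv m (A : 'M[C]_m) : ctrmx (invmx A) = invmx (ctrmx A).
Proof. by rewrite /ctrmx trmx_inv map_invmx. Qed.

Lemma ctrmx_bc m p (g : nat -> 'M[C]_(q, p)) :
  ctrmx (bc m g) = br m (fun l => ctrmx (g l)).
Proof. by apply/matrixP => i k; rewrite !mxE. Qed.

Lemma ctrmx_br m p (g : nat -> 'M[C]_(p, q)) :
  ctrmx (br m g) = bc m (fun l => ctrmx (g l)).
Proof. by apply/matrixP => i k; rewrite !mxE. Qed.

Lemma ctrmx_sum m n (I : finType) (F : I -> 'M[C]_(m, n)) :
  ctrmx (\sum_i F i) = \sum_i ctrmx (F i).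
Proof.
elim/big_ind2: _ => //; first by rewrite ctrmx0.
by move=> x A y B <- <-; rewrite ctrmxD.
Qed.

Lemma ctrmx_brow_I j (X : 'M[C]_(q, bsz j)) :
  ctrmx (brow_I X) = castmx (bsz_recr q j, erefl) (col_mx (ctrmx X) 1%:M).
Proof.
rewrite /ctrmx /brow_I trmx_cast map_castmx tr_row_mx map_col_mx.
by rewrite trmx1 map_mx1.
Qed.

Lemma ctr_bc_mul m p p' (f : nat -> 'M[C]_(q, p)) (g : nat -> 'M[C]_(q, p')) :
  ctrmx (bc m f) *m bc m g = \sum_(l < m) ctrmx (f l) *m g l.
Proof. by rewrite ctrmx_bc br_mul_bc. Qed.

Lemma blk_bc m p (f : nat -> 'M[C]_(q, p)) l : (l < m)%N -> blk (bc m f) l = f l.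
Proof.
move=> lm; rewrite /blk.
have -> : (insub l : option 'I_m) = Some (Ordinal lm) by rewrite insubT.
by rewrite /bc mxcolK.
Qed.

Lemma mul_bsz0 p p' (A : 'M[C]_(p, bsz 0)) (B : 'M[C]_(bsz 0, p')) : A *m B = 0.
Proof.
apply/matrixP => i k; rewrite !mxE big1 // => -[x hx] _.
by exfalso; move: hx; rewrite bszE.
Qed.

Definition ej m (i : nat) : 'M[C]_(bsz m, q) :=
  bc m (fun l => if l == i then 1%:M else 0).

Lemma sum_pick m p p' (F : nat -> 'M[C]_(p, p')) i : (i < m)%N ->
  \sum_(k < m) (if (k : nat) == i then F k else 0) = F i.
Proof.
move=> im; rewrite (bigD1 (Ordinal im)) //= eqxx big1 ?addr0 // => k nk.
case: eqP => // ek; exfalso; move/eqP: nk; apply; exact: val_inj.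
Qed.

Lemma sum_pick' m p p' (F : nat -> 'M[C]_(p, p')) i : (i < m)%N ->
  \sum_(k < m) (if i == (k : nat) then F k else 0) = F i.
Proof.
move=> im; rewrite -(sum_pick F im); apply: eq_bigr => k _; by rewrite eq_sym.
Qed.

Lemma ctr_bc_ej m p (f : nat -> 'M[C]_(q, p)) i : (i < m)%N ->
  ctrmx (ej m i) *m bc m f = f i.
Proof.
move=> im; rewrite /ej ctr_bc_mul -(sum_pick f im); apply: eq_bigr => k _.
by case: eqP => _; rewrite ?ctrmx1 ?ctrmx0 ?mul1mx ?mul0mx.
Qed.

Lemma br_ej m p (f : nat -> 'M[C]_(p, q)) i : (i < m)%N ->
  br m f *m ej m i = f i.
Proof.
move=> im; rewrite /ej br_mul_bc -(sum_pick f im); apply: eq_bigr => k _.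
by case: eqP => _; rewrite ?mulmx1 ?mulmx0.
Qed.

Lemma bmx_ej m (B : nat -> nat -> 'M[C]_q) i : (i < m)%N ->
  bmx m B *m ej m i = bc m (fun l => B l i).
Proof.
move=> im; rewrite /ej bmx_mul_bc; apply: eq_bc => l _.
rewrite -(sum_pick (B l) im); apply: eq_bigr => k _.
by case: eqP => _; rewrite ?mulmx1 ?mulmx0.
Qed.

Lemma bmx_form m p p' (B : nat -> nat -> 'M[C]_q) (f : nat -> 'M[C]_(q, p))
   (g : nat -> 'M[C]_(q, p')) :
  ctrmx (bc m f) *m bmx m B *m bc m g =
  \sum_(l < m) \sum_(k < m) ctrmx (f l) *m B l k *m g k.
Proof.
rewrite -mulmxA bmx_mul_bc ctr_bc_mul; apply: eq_bigr => l _.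
by rewrite mulmx_sumr; apply: eq_bigr => k _; rewrite mulmxA.
Qed.

Lemma br_mul_bmx m p (f : nat -> 'M[C]_(p, q)) (B : nat -> nat -> 'M[C]_q) :
  br m f *m bmx m B = br m (fun k => \sum_(l < m) f l *m B l k).
Proof. by rewrite /br /bmx mul_mxrow_mxblock. Qed.

Lemma brK m p (V : 'M[C]_(p, bsz m)) : br m (fun l => ctrmx (blk (ctrmx V) l)) = V.
Proof. by rewrite -ctrmx_bc blkK ctrmxK. Qed.

Lemma br_inj m p (f g : nat -> 'M[C]_(p, q)) :
  br m f = br m g -> forall l, (l < m)%N -> f l = g l.
Proof.
move=> H l lm; rewrite -(ctrmxK (f l)) -(ctrmxK (g l)); congr ctrmx.
apply: (@bc_inj m p (fun l => ctrmx (f l)) (fun l => ctrmx (g l))) => //; by rewrite -!ctrmx_br H.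
Qed.
End Blocks.

Section MatFacts.
Variable C : numClosedFieldType.

Lemma unitmx_ker n (A : 'M[C]_n) :
  (forall x : 'cV[C]_n, A *m x = 0 -> x = 0) -> A \in unitmx.
Proof.
move=> H; rewrite unitmxE unitfE -det_tr; apply/negP => /det0P [v nv0 vA].
have := H v^T; rewrite -(trmxK A) -trmx_mul vA trmx0 => /(_ erefl) /eqP.
by rewrite -trmx0 (inj_eq trmx_inj) (negbTE nv0).
Qed.

Lemma unitmx_lker n (A : 'M[C]_n) :
  (forall x : 'rV[C]_n, x *m A = 0 -> x = 0) -> A \in unitmx.
Proof.
move=> H; rewrite unitmxE unitfE; apply/negP => /det0P [v nv0 vA].
by move: nv0; rewrite (H v vA) eqxx.
Qed.

Lemma posdef_herm n (A : 'M[C]_n) : posdef A -> ctrmx A = A.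
Proof. by case. Qed.

Lemma posdef_ker n (A : 'M[C]_n) (x : 'cV[C]_n) : posdef A -> A *m x = 0 -> x = 0.
Proof.
move=> [_ H] Ax; apply/eqP; apply/negPn/negP => /H.
by rewrite -mulmxA Ax mulmx0 mxE ltxx.
Qed.

Lemma posdef_unit n (A : 'M[C]_n) : posdef A -> A \in unitmx.
Proof. by move=> P; apply: unitmx_ker => x; apply: posdef_ker. Qed.

Lemma posdef_lker n (A : 'M[C]_n) (x : 'rV[C]_n) : posdef A -> x *m A = 0 -> x = 0.
Proof.
move=> P xA; have := @posdef_ker n A (ctrmx x) P.
rewrite -{1}(posdef_herm P) -ctrmx_mul xA ctrmx0 => /(_ erefl) /(congr1 (@ctrmx C _ _)).
by rewrite ctrmxK ctrmx0.
Qed.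

Lemma posdef_inv n (A : 'M[C]_n) : posdef A -> posdef (invmx A).
Proof.
move=> P; have U := posdef_unit P; split.
  by rewrite /herm_mx ctrmx_inv (posdef_herm P).
move=> x nx; set y := invmx A *m x.
have ny : y != 0.
  apply: contraNneq nx => y0; by rewrite -[x](mulKVmx U) -/y y0 mulmx0.
have := (proj2 P) y ny.
rewrite /y ctrmx_mul ctrmx_inv (posdef_herm P) -!mulmxA (mulKVmx U).
by rewrite !mulmxA.
Qed.

Lemma posdef_congr n m (A : 'M[C]_n) (B : 'M[C]_(n, m)) :
  posdef A -> (forall x : 'cV[C]_m, B *m x = 0 -> x = 0) ->
  posdef (ctrmx B *m A *m B).
Proof.
move=> P K; split.
  by rewrite /herm_mx !ctrmx_mul ctrmxK (posdef_herm P) mulmxA.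
move=> x nx; have nBx : B *m x != 0 by apply/eqP => /K /eqP; apply/negP.
have := (proj2 P) _ nBx; by rewrite ctrmx_mul !mulmxA.
Qed.

Lemma entry_eq m n (A B : 'M[C]_(m, n)) : (forall i j, A i j = B i j) -> A = B.
Proof. by move=> H; apply/matrixP. Qed.

End MatFacts.

Section Schur.
Variable C : numClosedFieldType.
Variable q : nat.
Notation bsz m := (\sum_(i < m) (fun _ : 'I_m => q) i)%N.
Variable t : nat -> 'M[C]_q.
Variable j : nat.
Hypothesis ht : forall i, (i <= 2 * j)%N -> ctrmx (t i) = t i.

Let Ho := hankel j t.
Let Hn := hankel j.+1 t.
Let Y : 'M[C]_(bsz j, q) := bc j (fun l => t (j + l)).
Definition ext p (V : 'M[C]_(bsz j, p)) : 'M[C]_(bsz j.+1, p) :=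
  bc j.+1 (fun l => if (l < j)%N then blk V l else 0).

Lemma hn_ext p (V : 'M[C]_(bsz j, p)) :
  Hn *m ext V = ext (Ho *m V) + @ej C q j.+1 j *m (ctrmx Y *m V).
Proof.
rewrite /Hn /hankel bmx_mul_bc /ext /ej bc_mul bcD; apply: eq_bc => l hl.
rewrite big_ord_recr /= ltnn mulmx0 addr0.
rewrite -{2 3}(blkK V) /Ho /hankel bmx_mul_bc /Y ctr_bc_mul.
case: ltnP => lj.
  rewrite blk_bc // (ltn_eqF lj) mul0mx addr0.
  by apply: eq_bigr => k _; rewrite ltn_ord.
have elj : l = j by apply/eqP; rewrite eqn_leq lj -ltnS hl.
rewrite elj eqxx mul1mx add0r; apply: eq_bigr => k _.
  by rewrite ltn_ord ht // mul2n -addnn leq_add2l ltnW.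
Qed.

Lemma hn_ej : Hn *m @ej C q j.+1 j = ext Y + @ej C q j.+1 j *m t (2 * j).
Proof.
rewrite /Hn /hankel bmx_ej // /ext /ej bc_mul bcD; apply: eq_bc => l hl.
case: ltnP => lj.
  by rewrite /Y blk_bc // (ltn_eqF lj) mul0mx addr0 addnC.
have elj : l = j by apply/eqP; rewrite eqn_leq lj -ltnS hl.
by rewrite elj eqxx mul1mx add0r mul2n -addnn.
Qed.

Lemma ctr_ext p p' (w : nat -> 'M[C]_(q, p')) (V : 'M[C]_(bsz j, p)) :
  ctrmx (bc j.+1 w) *m ext V = ctrmx (bc j w) *m V.
Proof.
rewrite /ext ctr_bc_mul big_ord_recr /= ltnn mulmx0 addr0.
rewrite -{2}(blkK V) ctr_bc_mul; apply: eq_bigr => k _.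
by rewrite ltn_ord.
Qed.

Lemma ctr_bc_ej' p (w : nat -> 'M[C]_(q, p)) :
  ctrmx (bc j.+1 w) *m @ej C q j.+1 j = ctrmx (w j).
Proof.
by rewrite -[LHS]ctrmxK ctrmx_mul ctrmxK ctr_bc_ej.
Qed.

Lemma herm_hankel_gen m : (forall i, (i <= 2 * m)%N -> ctrmx (t i) = t i) ->
  ctrmx (hankel m.+1 t) = hankel m.+1 t.
Proof.
move=> H; apply/matrixP => x y; rewrite !mxE.
rewrite -[in RHS](H (tagnat.sig1 x + tagnat.sig1 y)%N).
  by rewrite !mxE addnC.
have := ltn_ord (tagnat.sig1 x); have := ltn_ord (tagnat.sig1 y).
rewrite !ltnS => h1 h2; rewrite mul2n -addnn; exact: leq_add.
Qed.


Lemma herm_hankel m : (forall i, (i <= 2 * m)%N -> ctrmx (t i) = t i) ->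
  ctrmx (hankel m t) = hankel m t.
Proof.
case: m => [|m] H.
  by apply/matrixP => -[x hx]; exfalso; move: hx; rewrite bszE.
apply: herm_hankel_gen => i hi; apply: H.
by apply: (leq_trans hi); rewrite leq_mul2l leqnSn orbT.
Qed.

Lemma ext_mul p p' (V : 'M[C]_(bsz j, p)) (A : 'M[C]_(p, p')) :
  ext V *m A = ext (V *m A).
Proof.
rewrite /ext bc_mul; apply: eq_bc => l hl; case: ifP => // lj; last by rewrite mul0mx.
rewrite -{2}(blkK V) bc_mul blk_bc //.
Qed.

Lemma ext_eq0 p (V : 'M[C]_(bsz j, p)) : ext V = 0 -> V = 0.
Proof.
move=> E; rewrite -(blkK V) -(bc0 C q j p); apply: eq_bc => l lj.
have := @bc_inj C q j.+1 p (fun l => if (l < j)%N then blk V l else 0) (fun _ => 0)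
  (etrans E (esym (bc0 C q j.+1 p))) l (ltnW lj).
by rewrite lj.
Qed.

Lemma ctr_ext_ext p p' (V : 'M[C]_(bsz j, p)) (U : 'M[C]_(bsz j, p')) :
  ctrmx (ext V) *m ext U = ctrmx V *m U.
Proof.
rewrite /ext ctr_ext; congr (ctrmx _ *m _).
by rewrite -[RHS]blkK; apply: eq_bc => l ->.
Qed.

Lemma ctr_ext_ej p (V : 'M[C]_(bsz j, p)) : ctrmx (ext V) *m @ej C q j.+1 j = 0.
Proof. by rewrite /ext ctr_bc_ej' ltnn ctrmx0. Qed.

Lemma ctr_ej_ext p (V : 'M[C]_(bsz j, p)) : ctrmx (@ej C q j.+1 j) *m ext V = 0.
Proof. by rewrite -[LHS]ctrmxK ctrmx_mul ctrmxK ctr_ext_ej ctrmx0. Qed.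

Lemma ctr_ej_ej : ctrmx (@ej C q j.+1 j) *m @ej C q j.+1 j = 1%:M.
Proof. by rewrite /ej ctr_bc_ej // eqxx. Qed.

Lemma ext_ej k : (k < j)%N -> ext (@ej C q j k) = @ej C q j.+1 k.
Proof.
move=> kj; rewrite /ext /ej; apply: eq_bc => l hl.
case: ltnP => lj; first by rewrite blk_bc.
by case: eqP => // elk; move: lj; rewrite elk leqNgt kj.
Qed.

Hypothesis Pn : posdef Hn.

Lemma HoH : ctrmx Ho = Ho.
Proof.
by apply: herm_hankel => i hi; apply: ht.
Qed.

Lemma Ho_posdef : posdef Ho.
Proof.
split; first exact: HoH.
move=> x nx.
have nv : ext x != 0 by apply/eqP => /ext_eq0 /eqP; apply/negP.
have := (proj2 Pn) _ nv; rewrite -mulmxA hn_ext mulmxDr mulmxA ctr_ext_ext.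
by rewrite ctr_ext_ej mul0mx addr0 mulmxA.
Qed.

Let Uo : Ho \in unitmx := posdef_unit Ho_posdef.
Let Z := invmx Ho *m Y.
Definition Sh := t (2 * j) - ctrmx Y *m invmx Ho *m Y.
Definition Bm := brow_I (- (ctrmx Y *m invmx Ho)).

Lemma Hn_v p (x : 'M[C]_(q, p)) :
  Hn *m (@ej C q j.+1 j *m x - ext (Z *m x)) = @ej C q j.+1 j *m (Sh *m x).
Proof.
have e1 : Ho *m (Z *m x) = Y *m x by rewrite /Z mulmxA (mulKVmx Uo).
rewrite mulmxBr [Hn *m (_ *m x)]mulmxA hn_ej hn_ext e1 mulmxDl ext_mul.
rewrite opprD addrACA subrr add0r -mulmxA -mulmxBr; congr (_ *m _).
by rewrite /Sh mulmxBl /Z !mulmxA.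
Qed.

Lemma Sh_posdef : posdef Sh.
Proof.
split.
  rewrite /herm_mx /Sh ctrmxB ht // !ctrmx_mul ctrmx_inv HoH ctrmxK.
  by rewrite mulmxA.
move=> x nx; set v := @ej C q j.+1 j *m x - ext (Z *m x).
have ev : ctrmx (@ej C q j.+1 j) *m v = x.
  by rewrite /v mulmxBr mulmxA ctr_ej_ej mul1mx ctr_ej_ext subr0.
have nv : v != 0 by apply: contraNneq nx => v0; rewrite -ev v0 mulmx0.
have := (proj2 Pn) _ nv; rewrite -mulmxA Hn_v mulmxA.
suff -> : ctrmx v *m @ej C q j.+1 j = ctrmx x by rewrite mulmxA.
by rewrite -[LHS]ctrmxK ctrmx_mul ctrmxK ev.
Qed.

Lemma B_ext p (V : 'M[C]_(bsz j, p)) : Bm *m ext V = - (ctrmx Y *m invmx Ho) *m V.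
Proof.
rewrite /Bm /ext brow_I_mul ltnn addr0; congr (_ *m _).
by rewrite -[RHS]blkK; apply: eq_bc => l ->.
Qed.

Lemma B_ej : Bm *m @ej C q j.+1 j = 1%:M.
Proof.
rewrite /Bm /ej brow_I_mul eqxx.
rewrite (@eq_bc C q j q _ (fun _ => 0)) ?bc0 ?mulmx0 ?add0r // => l lj.
by rewrite (ltn_eqF lj).
Qed.

Lemma B_orth k : (k < j)%N -> Bm *m bc j.+1 (fun l => t (l + k)) = 0.
Proof.
move=> kj.
have -> : bc j.+1 (fun l => t (l + k)) = Hn *m @ej C q j.+1 k.
  by rewrite /Hn /hankel bmx_ej // ltnW.
rewrite -ext_ej //.
rewrite hn_ext mulmxDr B_ext mulmxA B_ej mul1mx.
by rewrite mulNmx -!mulmxA (mulKmx Uo) addNr.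
Qed.

Lemma schur_form p (w : nat -> 'M[C]_(q, p)) :
  ctrmx (bc j.+1 w) *m invmx Hn *m bc j.+1 w =
  ctrmx (bc j w) *m invmx Ho *m bc j w +
  ctrmx (Bm *m bc j.+1 w) *m invmx Sh *m (Bm *m bc j.+1 w).
Proof.
have Us : Sh \in unitmx := posdef_unit Sh_posdef.
have Un : Hn \in unitmx := posdef_unit Pn.
set W' := bc j w; set U := invmx Ho *m W'.
have hb : Bm *m bc j.+1 w = w j - ctrmx Y *m U.
  by rewrite /Bm brow_I_mul mulNmx addrC /U mulmxA.
set y := invmx Sh *m (Bm *m bc j.+1 w).
set G := ext U + (@ej C q j.+1 j *m y - ext (Z *m y)).
have HG : Hn *m G = bc j.+1 w.
  rewrite /G mulmxDr Hn_v hn_ext /U (mulKVmx Uo) /y (mulKVmx Us).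
  rewrite -addrA -mulmxDr hb addrCA subrr addr0.
  rewrite /ext /ej bc_mul bcD; apply: eq_bc => l hl.
  case: ltnP => lj; first by rewrite blk_bc // (ltn_eqF lj) mul0mx addr0.
  have elj : l = j by apply/eqP; rewrite eqn_leq lj -ltnS hl.
  by rewrite elj eqxx mul1mx add0r.
rewrite -[LHS]mulmxA.
have -> : invmx Hn *m bc j.+1 w = G by rewrite -HG mulKmx.
rewrite /G !mulmxDr mulmxN ctr_ext mulmxA ctr_bc_ej' ctr_ext.
rewrite -/W' -[ctrmx W' *m invmx Ho *m W']mulmxA -/U.
rewrite -[ctrmx (Bm *m _) *m _ *m _]mulmxA -/y [in ctrmx (Bm *m _)]hb.
rewrite ctrmxB ctrmx_mul /U ctrmx_mul ctrmx_inv HoH ctrmxK mulmxBl /Z !mulmxA.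
done.
Qed.
End Schur.

Section Shift.
Variable C : numClosedFieldType.
Variable q : nat.
Notation bsz m := (\sum_(i < m) (fun _ : 'I_m => q) i)%N.

Lemma Tmx_mul j p (g : nat -> 'M[C]_(q, p)) :
  Tmx C q j *m bc j.+1 g = bc j.+1 (fun l => if l is l'.+1 then g l' else 0).
Proof.
rewrite /Tmx bmx_mul_bc; apply: eq_bc => -[|l] hl.
  by rewrite big1 // => k _; rewrite mul0mx.
rewrite -(sum_pick' g (ltnW hl)).
by apply: eq_bigr => k _; rewrite eqSS; case: eqP; rewrite ?mul1mx ?mul0mx.
Qed.

Lemma Lmx_mul j p (z : C) (g : nat -> 'M[C]_(q, p)) :
  (1%:M - z *: Tmx C q j) *m bc j.+1 g =
  bc j.+1 (fun l => g l - z *: (if l is l'.+1 then g l' else 0)).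
Proof.
by rewrite mulmxBl mul1mx -scalemxAl Tmx_mul bcZ bcN bcD.
Qed.

Lemma Lmx_unit j (z : C) : (1%:M - z *: Tmx C q j) \in unitmx.
Proof.
apply: unitmx_ker => x; rewrite -(blkK x) Lmx_mul => H.
have H0 := @bc_inj C q j.+1 1 _ (fun _ => 0) (etrans H (esym (bc0 C q j.+1 1))).
rewrite -(bc0 C q j.+1 1); apply: eq_bc.
elim=> [|l IH] hl.
  by have := H0 0 hl; rewrite scaler0 subr0.
have := H0 l.+1 hl; rewrite IH ?scaler0 ?subr0 //.
exact: ltnW.
Qed.

Lemma Rmx_sol j (z : C) p (V W : 'M[C]_(bsz j.+1, p)) :
  (1%:M - z *: Tmx C q j) *m V = W -> Rmx q j z *m W = V.
Proof. by move=> <-; rewrite /Rmx mulKmx // Lmx_unit. Qed.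

End Shift.

Section DSMproof.
Variable C : numClosedFieldType.
Variable q : nat.
Notation bsz m := (\sum_(i < m) (fun _ : 'I_m => q) i)%N.
Variables (a b : C) (s : nat -> 'M[C]_q).

Definition cc (i : nat) : 'M[C]_q := b *: s i - s i.+1.
Notation sh := (shat a b s).

Lemma shat_c i : sh i = cc i.+1 - a *: cc i.
Proof. by apply/matrixP => x y; rewrite /shat /cc !mxE; ring. Qed.

Lemma u2_sol j :
  Rmx q j a *m (u2 a b s j + a *: (vmx C q j *m s 0%N)) = - bc j.+1 cc.
Proof.
apply: Rmx_sol; rewrite mulmxN Lmx_mul /u2 /vmx !bcolE bc_mul bcZ bcD bcN.
apply: eq_bc => -[|l] _ /=.
  by rewrite mul1mx; apply/matrixP => x y; rewrite /u20 /cc !mxE; ring.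
by rewrite mul0mx shat_c; apply/matrixP => x y; rewrite !mxE; ring.
Qed.

Definition pw (l : nat) : 'M[C]_q := a ^+ l *: 1%:M.

Lemma v_sol j : Rmx q j a *m vmx C q j = bc j.+1 pw.
Proof.
apply: Rmx_sol; rewrite Lmx_mul /vmx bcolE; apply: eq_bc => -[|l] _.
  by rewrite /pw expr0 scale1r scaler0 subr0.
by rewrite /pw scalerA -exprS subrr.
Qed.


Lemma lambda_eq j :
  lambda a b s j = ctrmx (bc j.+1 cc) *m invmx (hankel j.+1 sh) *m bc j.+1 cc.
Proof.
rewrite /lambda -ctrmx_mul -[_ *m Rmx _ _ _ *m _]mulmxA u2_sol.
by rewrite ctrmxN !mulNmx mulmxN opprK.
Qed.

Lemma mu_eq j :
  mu a b s j = ctrmx (bc j.+1 pw) *m invmx (hankel j.+1 cc) *m bc j.+1 pw.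
Proof.
by rewrite /mu -ctrmx_mul -[_ *m Rmx _ _ _ *m _]mulmxA v_sol.
Qed.

Lemma Q2_eq j : Q2 a b s j a = Bm sh j *m bc j.+1 cc.
Proof.
case: j => [|i].
  rewrite /Bm brow_I_mul mul_bsz0 add0r.
  by apply/matrixP => x y; rewrite /Q2 /u20 /cc !mxE; ring.
by rewrite /Q2 -mulmxA u2_sol mulmxN opprK.
Qed.

Lemma Gamma1_eq j : Gamma1 b s j a = Bm cc j *m bc j.+1 pw.
Proof.
case: j => [|i].
  by rewrite /Bm brow_I_mul mul_bsz0 add0r /pw expr0 scale1r.
by rewrite /Gamma1 -mulmxA v_sol.
Qed.

Lemma H2hat_eq j : H2hat a b s j = Sh sh j.
Proof. by case: j => [|i] //; rewrite /Sh mul_bsz0 subr0. Qed.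

Lemma K1hat_eq j : K1hat b s j = Sh cc j.
Proof. by case: j => [|i] //; rewrite /Sh mul_bsz0 subr0. Qed.

Lemma lbold_eq j : (forall i, (i <= 2 * j)%N -> ctrmx (sh i) = sh i) ->
  posdef (hankel j.+1 sh) ->
  lbold a b s j = ctrmx (Bm sh j *m bc j.+1 cc) *m invmx (Sh sh j) *m (Bm sh j *m bc j.+1 cc).
Proof.
move=> ht P; case: j ht P => [|i] ht P.
  by rewrite /lbold lambda_eq (schur_form ht P) mul_bsz0 add0r.
by rewrite /lbold !lambda_eq (schur_form ht P) addrC addKr.
Qed.

Lemma mbold_eq j : (forall i, (i <= 2 * j)%N -> ctrmx (cc i) = cc i) ->
  posdef (hankel j.+1 cc) ->
  mbold a b s j = ctrmx (Bm cc j *m bc j.+1 pw) *m invmx (Sh cc j) *m (Bm cc j *m bc j.+1 pw).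
Proof.
move=> ht P; case: j ht P => [|i] ht P.
  by rewrite /mbold mu_eq (schur_form ht P) mul_bsz0 add0r.
by rewrite /mbold !mu_eq (schur_form ht P) addrC addKr.
Qed.

Lemma br0 m p : br m (fun _ => 0 : 'M[C]_(p, q)) = 0.
Proof. by rewrite /br mxrow0. Qed.

Lemma Q_unit j : (forall i, (i <= 2 * j)%N -> ctrmx (sh i) = sh i) ->
  posdef (hankel j.+1 sh) -> posdef (hankel j.+1 cc) ->
  (Bm sh j *m bc j.+1 cc) \in unitmx.
Proof.
move=> ht P1 P2; apply: unitmx_lker => r Hr.
set rho := r *m Bm sh j.
set rl := fun l => ctrmx (blk (ctrmx rho) l).
have Er : br j.+1 rl = rho := brK rho.
have d0 : rho *m bc j.+1 cc = 0 by rewrite /rho -mulmxA.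
set de := fun k => rho *m bc j.+1 (fun l => cc (l + k)).
have de0 : de 0%N = 0.
  by rewrite /de -d0; congr (_ *m _); apply: eq_bc => l _; rewrite addn0.
have deS : forall k, (k < j)%N -> de k.+1 = a *: de k.
  move=> k kj; have := B_orth ht P1 kj.
  move/(congr1 (fun M => r *m M)); rewrite mulmx0 mulmxA -/rho.
  rewrite (@eq_bc C q j.+1 q _ (fun l => cc (l + k.+1) + (- (a *: cc (l + k))))); last first.
    by move=> l _; rewrite shat_c addnS.
  rewrite -bcD -bcN -bcZ mulmxDr mulmxN -scalemxAr => /eqP.
  by rewrite subr_eq0 => /eqP.
have dez : forall k, (k <= j)%N -> de k = 0.
  elim=> [|k IH] kj; first exact: de0.
  by rewrite deS // IH ?scaler0 // ltnW.
have : rho *m hankel j.+1 cc = 0.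
  rewrite -Er /hankel br_mul_bmx -[RHS](br0 j.+1 1).
  apply: eq_mxrow => k; transitivity (de k); last exact: dez k (ltn_ord k).
  by rewrite /de -Er br_mul_bc.
move/(posdef_lker P2) => r0.
have : rho *m @ej C q j.+1 j = r by rewrite /rho -mulmxA B_ej mulmx1.
by rewrite r0 mul0mx => <-.
Qed.

Lemma G_unit j : (forall i, (i <= 2 * j)%N -> ctrmx (cc i) = cc i) ->
  posdef (hankel j.+1 cc) -> posdef (hankel j sh) ->
  (Bm cc j *m bc j.+1 pw) \in unitmx.
Proof.
move=> ht P1 P2; apply: unitmx_lker => r Hr.
set rho := r *m Bm cc j.
set rl := fun l => ctrmx (blk (ctrmx rho) l).
have Er : br j.+1 rl = rho := brK rho.
have orth : forall k, (k < j)%N -> \sum_(l < j.+1) rl l *m cc (l + k) = 0.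
  move=> k kj; have := B_orth ht P1 kj.
  move/(congr1 (fun M => r *m M)); rewrite mulmx0 mulmxA -/rho -Er br_mul_bc.
  done.
set sg := fun m => \sum_(m <= l < j.+1) a ^+ (l - m) *: rl l.
have sg_rec : forall m, (m < j.+1)%N -> sg m = rl m + a *: sg m.+1.
  move=> m mj; rewrite /sg big_ltn // subnn expr0 scale1r; congr (_ + _).
  rewrite scaler_sumr; apply: eq_big_nat => l /andP [ml _].
  by rewrite scalerA -exprS subnSK.
have sg_end : sg j.+1 = 0 by rewrite /sg big_geq.
have sg0 : sg 0%N = 0.
  rewrite /sg big_mkord; transitivity (rho *m bc j.+1 pw); last by rewrite /rho -mulmxA.
  rewrite -Er br_mul_bc.
  by apply: eq_bigr => l _; rewrite subn0 /pw -scalemxAr mulmx1.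
have key : forall k, (k < j)%N ->
    \sum_(m < j) sg m.+1 *m sh (m + k) = 0.
  move=> k kj; rewrite -[RHS](orth k kj).
  rewrite -(big_mkord xpredT (fun m => sg m.+1 *m sh (m + k))).
  rewrite -(big_mkord xpredT (fun l => rl l *m cc (l + k))).
  have -> : \sum_(0 <= l < j.+1) rl l *m cc (l + k) =
            \sum_(0 <= l < j.+1) (sg l *m cc (l + k) - (a *: sg l.+1) *m cc (l + k)).
    apply: eq_big_nat => l /andP [_ lj].
    by rewrite (sg_rec l lj) mulmxDl addrK.
  rewrite big_split /= sumrN big_nat_recl // sg0 mul0mx add0r.
  rewrite big_nat_recr //= sg_end scaler0 mul0mx addr0.
  rewrite -sumrB; apply: eq_big_nat => m _.
  by rewrite shat_c mulmxBr -scalemxAr scalemxAl addSn.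
have Z0 : br j (fun m => sg m.+1) = 0.
  apply: (posdef_lker P2).
  rewrite /hankel br_mul_bmx -[RHS](br0 j 1); apply: eq_mxrow => k.
  exact: key k (ltn_ord k).
have sgj : sg j = 0.
  case E: j => [|i]; first exact: sg0.
  move: Z0; rewrite E => Z0.
  exact: (@br_inj C q i.+1 1 _ (fun _ => 0) (etrans Z0 (esym (br0 i.+1 1))) i (ltnSn i)).
have rlj : rl j = 0.
  have := sg_rec j (ltnSn j); rewrite sgj sg_end scaler0 addr0 => H.
  by rewrite -H.
have : rho *m @ej C q j.+1 j = r by rewrite /rho -mulmxA B_ej mulmx1.
by rewrite -Er br_ej // rlj => <-.
Qed.

Lemma herm_cc_gen N : a \is Num.real -> b \is Num.real ->
  (forall i, (i <= N)%N -> ctrmx (s i) = s i) ->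
  forall i, (i.+1 <= N)%N -> ctrmx (cc i) = cc i.
Proof.
move=> ha hb hs i hi; rewrite /cc ctrmxB ctrmxZ (conj_Creal hb) hs ?hs //.
exact: ltnW.
Qed.

Lemma herm_sh_gen N : a \is Num.real -> b \is Num.real ->
  (forall i, (i <= N)%N -> ctrmx (s i) = s i) ->
  forall i, (i.+2 <= N)%N -> ctrmx (sh i) = sh i.
Proof.
move=> ha hb hs i hi; rewrite /shat ctrmxB ctrmxD !ctrmxZ.
rewrite rmorphN rmorphM rmorphD /= (conj_Creal ha) (conj_Creal hb).
by rewrite !hs // ?(ltnW hi) // (ltnW (ltnW hi)).
Qed.
End DSMproof.

Unset Implicit Arguments.

Theorem mainTheorem4 (C : numClosedFieldType) (q n : nat) (a b : C)
    (s : nat -> 'M[C]_q) :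
  (0 < q)%N -> (0 < n)%N ->
  a \is Num.real -> b \is Num.real -> a < b ->
  (forall j, (j <= 2 * n + 1)%N -> herm_mx (s j)) ->
  posdef (H1 s n) -> posdef (H2 a b s n.-1) ->
  posdef (K1 b s n) -> posdef (K2 a s n) ->
  (forall j, (j < n)%N ->
     lbold a b s j = ctrmx (Q2 a b s j a) *m invmx (H2hat a b s j) *m Q2 a b s j a
     /\ posdef (lbold a b s j)) /\
  (forall j, (j <= n)%N ->
     mbold a b s j = ctrmx (Gamma1 b s j a) *m invmx (K1hat b s j) *m Gamma1 b s j a
     /\ posdef (mbold a b s j)).
Proof.
move=> _ n0 ha hb _ hs _ PH2 PK1 _.
have hcc : forall i, (i <= 2 * n)%N -> ctrmx (cc b s i) = cc b s i.
  move=> i hi; apply: (herm_cc_gen ha hb hs); by rewrite addn1 ltnS.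
have hsh : forall i, (i < 2 * n)%N -> ctrmx (shat a b s i) = shat a b s i.
  move=> i hi; apply: (herm_sh_gen ha hb hs); by rewrite addn1 !ltnS.
have Psh : forall j, (j < n)%N -> posdef (hankel j.+1 (shat a b s)).
  suff H : forall d j, (j + d)%N = n.-1 -> posdef (hankel j.+1 (shat a b s)).
    move=> j jn; apply: (H (n.-1 - j)%N); rewrite subnKC //.
    by rewrite -ltnS prednK.
  elim=> [|d IH] j E.
    by move: E; rewrite addn0 => ->.
  apply: (@Ho_posdef C q (shat a b s) j.+1).
    move=> i hi; apply: hsh; apply: (leq_ltn_trans hi).
    rewrite ltn_mul2l /=; lia.
  by apply: IH; rewrite addSnnS.
have Pcc : forall j, (j <= n)%N -> posdef (hankel j.+1 (cc b s)).
  suff H : forall d j, (j + d)%N = n -> posdef (hankel j.+1 (cc b s)).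
    by move=> j jn; apply: (H (n - j)%N); rewrite subnKC.
  elim=> [|d IH] j E.
    by move: E; rewrite addn0 => ->.
  apply: (@Ho_posdef C q (cc b s) j.+1).
    move=> i hi; apply: hcc; apply: (leq_trans hi).
    rewrite leq_mul2l; apply/orP; right; lia.
  by apply: IH; rewrite addSnnS.
split.
  move=> j jn.
  have ht : forall i, (i <= 2 * j)%N -> ctrmx (shat a b s i) = shat a b s i.
    move=> i hi; apply: hsh; apply: (leq_ltn_trans hi); by rewrite ltn_mul2l.
  have P := Psh j jn.
  have E : lbold a b s j = ctrmx (Q2 a b s j a) *m invmx (H2hat a b s j) *m Q2 a b s j a.
    by rewrite (lbold_eq ht P) Q2_eq H2hat_eq.
  split => //; rewrite (lbold_eq ht P).
  apply: posdef_congr; first exact: posdef_inv (Sh_posdef ht P).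
  have U := Q_unit ht P (Pcc j (ltnW jn)).
  by move=> x Hx; rewrite -(mulKmx U x) Hx mulmx0.
move=> j jn.
have ht : forall i, (i <= 2 * j)%N -> ctrmx (cc b s i) = cc b s i.
  move=> i hi; apply: hcc; apply: (leq_trans hi); by rewrite leq_mul2l jn orbT.
have P := Pcc j jn.
have E : mbold a b s j = ctrmx (Gamma1 b s j a) *m invmx (K1hat b s j) *m Gamma1 b s j a.
  by rewrite (@mbold_eq C q a b s j ht P) Gamma1_eq K1hat_eq.
split => //; rewrite (@mbold_eq C q a b s j ht P).
apply: posdef_congr; first exact: posdef_inv (Sh_posdef ht P).
have U : (Bm (cc b s) j *m bc j.+1 (@pw C q a)) \in unitmx.
  case: j jn ht P E => [|i] jn ht P E.
    by rewrite -Gamma1_eq unitmx1.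
  by apply: G_unit => //; apply: Psh.
by move=> x Hx; rewrite -(mulKmx U x) Hx mulmx0.
Qed.
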